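(* Let $m\ge1$ and let $N_m$ be the semiring of polynomials in $X_1,\ldots,X_m$ with nonnegative integer coefficients. Let $P\in N_m$ be a sum of $n$ monomials (possibly repeated, each with coefficient $1$), where $n$ is prime. Then $P$ has unique factorisation inside $N_m$, i.e. any two factorisations of $P$ into irreducible elements of $N_m$ coincide up to the order of the factors.
   Context: An element $Q\in N_m$ with $Q\neq 0,1$ is irreducible in $N_m$ if whenever $Q=ST$ with $S,T\in N_m$, one of $S,T$ equals $1$. The number of monomials of $P$ (counted with repetition) equals $P(1,\ldots,1)$. *)

(* Defs.v *)
From HB Require Import structures.
From mathcomp Require Import all_boot all_order all_algebra.
From mathcomp Require Import mpoly.
Set Implicit Arguments. Unset Strict Implicit. Unset Printing Implicit Defensive.
Import Order.TTheory GRing.Theory Num.Theory.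
Local Open Scope ring_scope.

(* N_m : polynomials in X_1..X_m with nonnegative integer coefficients,
   realised as the sub-semiring of {mpoly int[m]} of polynomials whose
   coefficients are all >= 0. *)
Definition inNm (m : nat) (p : {mpoly int[m]}) : Prop :=
  forall k : 'X_{1..m}, 0 <= p@_k.

Definition irreducibleNm (m : nat) (Q : {mpoly int[m]}) : Prop :=
  [/\ inNm Q, Q <> 0, Q <> 1 &
      forall S T : {mpoly int[m]}, inNm S -> inNm T -> Q = S * T ->
        S = 1 \/ T = 1].

(* Main.v *)
Require Import Defs.
From HB Require Import structures.
From mathcomp Require Import all_boot all_order all_algebra.
From mathcomp Require Import mpoly.
From mathcomp Require Import zify ring lra.
Import Order.TTheory GRing.Theory Num.Theory.
Local Open Scope ring_scope.

Definition ev {m : nat} (p : {mpoly int[m]}) : int := p.@[fun _ => 1].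

Lemma evE {m} (p : {mpoly int[m]}) : ev p = \sum_(k <- msupp p) p@_k.
Proof.
rewrite /ev mevalE; apply: eq_bigr => k _.
by rewrite big1 ?mulr1 // => i _; rewrite expr1n.
Qed.

Lemma evM {m} (p q : {mpoly int[m]}) : ev (p * q) = ev p * ev q.
Proof. by rewrite /ev mevalM. Qed.

Lemma evX {m} (k : 'X_{1..m}) : ev ('X_[k] : {mpoly int[m]}) = 1.
Proof. by rewrite /ev mevalX big1 // => i _; rewrite expr1n. Qed.

Lemma ev1 {m} : ev (1 : {mpoly int[m]}) = 1.
Proof. by rewrite /ev meval1. Qed.

Lemma coef_supp {m} (p : {mpoly int[m]}) k : inNm p -> k \in msupp p -> 1 <= p@_k.
Proof.
move=> hp; rewrite mcoeff_msupp => nz; have := hp k; move: nz.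
case: (p@_k) => [[|n]|n] //.
Qed.

Lemma ev_ge1 {m} (p : {mpoly int[m]}) : inNm p -> p != 0 -> 1 <= ev p.
Proof.
move=> hp nz; rewrite evE.
case E: (msupp p) => [|k r].
  by move/eqP: E; rewrite msupp_eq0 (negbTE nz).
rewrite big_cons.
have h1 : 1 <= p@_k by apply: coef_supp => //; rewrite E mem_head.
have h2 : 0 <= \sum_(j <- r) p@_j by apply: sumr_ge0 => j _; apply: hp.
by rewrite -[1]addr0; apply: lerD.
Qed.

Lemma inNmX {m} (k : 'X_{1..m}) : inNm ('X_[k] : {mpoly int[m]}).
Proof. by move=> j; rewrite mcoeffX; case: (_ == _). Qed.

Lemma X_eq1 {m} (k : 'X_{1..m}) : ('X_[k] : {mpoly int[m]}) = 1 -> k = 0%MM.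
Proof.
move=> h; have := congr1 (fun p : {mpoly int[m]} => p@_k) h.
by rewrite -mpolyX0 !mcoeffX eqxx /=; case: eqP.
Qed.

Lemma ev1_mono {m} (p : {mpoly int[m]}) : inNm p -> ev p = 1 -> exists k, p = 'X_[k].
Proof.
move=> hp; rewrite evE => hs.
case E: (msupp p) hs => [|k r]; first by rewrite big_nil.
rewrite big_cons => hs.
have h1 : 1 <= p@_k by apply: coef_supp => //; rewrite E mem_head.
case: r E hs => [|j r] E hs.
  exists k; rewrite [LHS]mpolyE E big_seq1.
  by rewrite big_nil addr0 in hs; rewrite hs scale1r.
rewrite big_cons in hs.
have h3 : 1 <= p@_j by apply: coef_supp => //; rewrite E !inE eqxx orbT.
have h2 : 0 <= \sum_(i <- r) p@_i by apply: sumr_ge0 => i _; apply: hp.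
by have := lerD h1 (lerD h3 h2); rewrite hs addr0.
Qed.

Lemma irr_mono {m} (k : 'X_{1..m}) : irreducibleNm ('X_[k] : {mpoly int[m]}) ->
  exists i, k = U_(i)%MM.
Proof.
case=> _ _ hne1 hirr.
case: (pickP (fun i => (0 < k i)%N)) => [i /= hi|h]; last first.
  exfalso; apply: hne1; suff -> : k = 0%MM by rewrite mpolyX0.
  by apply/mnmP => j; rewrite mnm0E; have := h j; rewrite /=; case: (k j).
exists i.
have hk : k = (U_(i) + (k - U_(i)))%MM.
  apply/mnmP => j; rewrite mnmDE mnmBE mnm1E.
  by case: eqP => [<-|_]; [rewrite subnKC | rewrite subn0].
have := hirr ('X_[U_(i)]) ('X_[(k - U_(i))%MM]) (inNmX _) (inNmX _).
rewrite -mpolyXD -hk => /(_ erefl) [/X_eq1/eqP|/X_eq1 h0].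
  by rewrite mnm1_eq0.
by rewrite hk h0 addm0.
Qed.

Lemma div_X {m} (Q : {mpoly int[m]}) (i : 'I_m) : inNm Q ->
  (forall k, k \in msupp Q -> (0 < k i)%N) ->
  exists R : {mpoly int[m]}, [/\ Q = 'X_[U_(i)] * R, inNm R & ev R = ev Q].
Proof.
move=> hQ hk.
pose R : {mpoly int[m]} := \sum_(k <- msupp Q) Q@_k *: 'X_[(k - U_(i))%MM].
have eQ : Q = 'X_[U_(i)] * R.
  rewrite /R mulr_sumr [LHS]mpolyE big_seq [RHS]big_seq.
  apply: eq_bigr => k /hk hki.
  rewrite -scalerAr -mpolyXD; congr (_ *: 'X_[_]).
  apply/mnmP => j; rewrite mnmDE mnmBE mnm1E.
  by case: eqP => [<-|_]; [rewrite subnKC | rewrite subn0].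
exists R; split => //.
  move=> j; rewrite /R raddf_sum /=; apply: sumr_ge0 => k _.
  by rewrite mcoeffZ mcoeffX mulr_ge0 //; case: (_ == _).
by rewrite eQ evM evX mul1r.
Qed.

Lemma irr_notdiv {m} (Q : {mpoly int[m]}) (i : 'I_m) : irreducibleNm Q -> ev Q != 1 ->
  exists2 k, k \in msupp Q & k i = 0%N.
Proof.
move=> hirrQ hne; case: (boolP (has (fun k : 'X_{1..m} => k i == 0%N) (msupp Q))) => [/hasP [k hk /eqP]|/hasPn hn].
  by exists k.
case: hirrQ => hQ _ _ hirr.
have [|R [eQ hR evR]] := @div_X _ Q i hQ.
  by move=> k hk; rewrite lt0n; apply: hn.
case: (hirr _ _ (inNmX _) hR eQ) => [/X_eq1/eqP|hR1].
  by rewrite mnm1_eq0.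
by move: hne; rewrite -evR hR1 ev1.
Qed.

Lemma key {m} (Q Q' : {mpoly int[m]}) (a b : 'X_{1..m}) : irreducibleNm Q' -> ev Q' != 1 ->
  Q * 'X_[a] = Q' * 'X_[b] -> forall i, (a i <= b i)%N.
Proof.
move=> irr ne e i; rewrite leqNgt; apply/negP => hlt.
have [k hk hki] := @irr_notdiv _ Q' i irr ne.
have : (b + k)%MM \in msupp (Q' * 'X_[b]).
  by rewrite (perm_mem (msuppMX _ _)); apply: map_f.
rewrite -e (perm_mem (msuppMX _ _)) => /mapP [k' _ hk'].
have := congr1 (fun x : 'X_{1..m} => x i) hk'; rewrite !mnmDE hki addn0 => h.
by move: hlt; rewrite h ltnNge leq_addr.
Qed.

Lemma irr_ev1 {m} {f : {mpoly int[m]}} : irreducibleNm f -> 1 <= ev f.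
Proof. by case=> hf hf0 _ _; apply: ev_ge1 => //; apply/eqP. Qed.

Lemma ev_prod_ge1 {m} {fs : seq {mpoly int[m]}} :
  (forall f, f \in fs -> irreducibleNm f) -> 1 <= ev (\prod_(f <- fs) f).
Proof.
elim: fs => [|f fs IH] hfs; first by rewrite big_nil ev1.
rewrite big_cons evM.
have h1 := irr_ev1 (hfs f (mem_head _ _)).
have h2 : 1 <= ev (\prod_(g <- fs) g).
  by apply: IH => g hg; apply: hfs; rewrite inE hg orbT.
nia.
Qed.

Lemma allmono {m} {fs : seq {mpoly int[m]}} :
  (forall f, f \in fs -> irreducibleNm f) -> ev (\prod_(f <- fs) f) = 1 ->
  exists ix : seq 'I_m, fs = map (fun i => 'X_[U_(i)]) ix.
Proof.
elim: fs => [|f fs IH] hfs; first by exists [::].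
rewrite big_cons evM => he.
have hf := hfs f (mem_head _ _).
have hfs' : forall g, g \in fs -> irreducibleNm g.
  by move=> g hg; apply: hfs; rewrite inE hg orbT.
have h1 := irr_ev1 hf.
have h2 := ev_prod_ge1 hfs'.
have e1 : ev f = 1 by nia.
have e2 : ev (\prod_(g <- fs) g) = 1 by nia.
have [ix ->] := IH hfs' e2.
have [k ek] := @ev1_mono _ f (let: And4 h _ _ _ := hf in h) e1.
move: hf; rewrite ek => /irr_mono [i ->].
by exists (i :: ix).
Qed.

Lemma decomp {m} {fs : seq {mpoly int[m]}} :
  (forall f, f \in fs -> irreducibleNm f) -> forall N : nat, prime N ->
  ev (\prod_(f <- fs) f) = N%:Z ->
  exists Q (ix : seq 'I_m), [/\ irreducibleNm Q, ev Q != 1 &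
     perm_eq fs (Q :: map (fun i => 'X_[U_(i)]) ix)].
Proof.
elim: fs => [|f fs IH] hfs N hN.
  rewrite big_nil ev1 => h; move: hN; have -> : N = 1%N by case: h.
  by [].
rewrite big_cons evM => he.
have hf := hfs f (mem_head _ _).
have hfs' : forall g, g \in fs -> irreducibleNm g.
  by move=> g hg; apply: hfs; rewrite inE hg orbT.
have h1 := irr_ev1 hf.
have h2 := ev_prod_ge1 hfs'.
case: (boolP (ev f == 1)) => [/eqP e1|ne1].
  have [k ek] := @ev1_mono _ f (let: And4 h _ _ _ := hf in h) e1.
  move: (hf); rewrite ek => /irr_mono [i ei].
  rewrite e1 mul1r in he.
  have [Q [ix [hQ hQ1 hp]]] := IH hfs' N hN he.
  exists Q, (i :: ix); split => //.
  rewrite ?ek ei /=.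
  apply: (@perm_trans _ ('X_[U_(i)] :: Q :: map (fun i => 'X_[U_(i)]) ix)).
    by rewrite perm_cons.
  by rewrite (perm_catCA [:: 'X_[U_(i)]] [:: Q]).
have e2 : ev (\prod_(g <- fs) g) = 1.
  move: he h1 h2 ne1; set x := ev f; set y := ev _.
  case: x => [a|a] //; case: y => [b|b] // he h1 h2 ne1.
  rewrite -PoszM in he; case: he => he.
  have hb : (b %| N)%N by rewrite -he dvdn_mull.
  case/primeP: hN => hN1 hd.
  case/orP: (hd b hb) => /eqP hb'.
    by rewrite hb'.
  exfalso; move: ne1 h1; rewrite hb' in he.
  have : (a = 1)%N by nia.
  by move=> ->.
have [ix eis] := allmono hfs' e2.
by exists f, ix; split => //; rewrite eis.
Qed.

Lemma ev_sumX {m} (s : seq 'X_{1..m}) :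
  ev (\sum_(mu <- s) ('X_[mu] : {mpoly int[m]})) = (size s)%:Z.
Proof.
elim: s => [|mu s IH]; first by rewrite big_nil /ev meval0.
by rewrite big_cons /ev mevalD -[meval _ (\sum_(_ <- _) _)]/(ev _) IH -/(ev _) evX /= intS.
Qed.

Lemma prodX {m} (ix : seq 'I_m) :
  \prod_(i <- ix) ('X_[U_(i)] : {mpoly int[m]}) = 'X_[\big[+%MM/0%MM]_(i <- ix) U_(i)%MM].
Proof.
elim: ix => [|i ix IH]; first by rewrite !big_nil mpolyX0.
by rewrite !big_cons IH mpolyXD.
Qed.

Lemma sumU_count {m} (ix : seq 'I_m) j :
  (\big[+%MM/0%MM]_(i <- ix) U_(i)%MM) j = count_mem j ix.
Proof.
elim: ix => [|i ix IH]; first by rewrite big_nil mnm0E.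
by rewrite big_cons mnmDE mnm1E IH.
Qed.

Lemma perm_of_count (T : eqType) (s t : seq T) :
  (forall x, count_mem x s = count_mem x t) -> perm_eq s t.
Proof.
move=> h.
have [u su pu] : exists2 u, subseq u t & perm_eq s u.
  by apply/count_subseqP => x; rewrite h.
have [v sv pv] : exists2 v, subseq v s & perm_eq t v.
  by apply/count_subseqP => x; rewrite h.
have hs : size u = size t.
  have := perm_size pu; have := perm_size pv; have := size_subseq su;
  have := size_subseq sv; lia.
have : u == t by rewrite -(size_subseq_leqif su).2 hs.
by move/eqP <-.
Qed.

Lemma prod_form {m} {fs : seq {mpoly int[m]}} {Q} {ix : seq 'I_m} :
  perm_eq fs (Q :: map (fun i => 'X_[U_(i)]) ix) ->
  \prod_(f <- fs) f = Q * 'X_[\big[+%MM/0%MM]_(i <- ix) U_(i)%MM].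
Proof. by move=> hp; rewrite (perm_big _ hp) big_cons big_map prodX. Qed.

Theorem mainTheorem4 (m : nat) (hm : (0 < m)%N) (n : nat) (hn : prime n)
  (s : seq 'X_{1..m}) (hs : size s = n)
  (fs gs : seq {mpoly int[m]}) :
  (forall f, f \in fs -> irreducibleNm f) ->
  (forall g, g \in gs -> irreducibleNm g) ->
  \prod_(f <- fs) f = \sum_(mu <- s) 'X_[mu] ->
  \prod_(g <- gs) g = \sum_(mu <- s) 'X_[mu] ->
  perm_eq fs gs.
Proof.
move=> hf hg ef eg.
have evP : ev (\sum_(mu <- s) ('X_[mu] : {mpoly int[m]})) = n%:Z by rewrite ev_sumX hs.
have [Q [ix [hQ hQ1 hpf]]] := decomp hf n hn (etrans (congr1 ev ef) evP).
have [Q' [iy [hQ' hQ'1 hpg]]] := decomp hg n hn (etrans (congr1 ev eg) evP).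
set a := (\big[+%MM/0%MM]_(i <- ix) U_(i))%MM.
set b := (\big[+%MM/0%MM]_(i <- iy) U_(i))%MM.
have e : Q * 'X_[a] = Q' * 'X_[b].
  by rewrite -(prod_form hpf) -(prod_form hpg) ef eg.
have eab : a = b.
  apply/mnmP => j; apply/eqP; rewrite eqn_leq.
  by rewrite (@key _ Q Q' a b hQ' hQ'1 e j) (@key _ Q' Q b a hQ hQ1 (esym e) j).
have hX : ('X_[a] : {mpoly int[m]}) != 0.
  apply/eqP => h; have := congr1 (fun p : {mpoly int[m]} => p@_a) h.
  by rewrite mcoeffX eqxx mcoeff0.
have eQ : Q = Q' by apply: (mulIf hX); rewrite e eab.
have pxy : perm_eq ix iy.
  apply: perm_of_count => j.
  by rewrite -!sumU_count -/a -/b eab.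
apply: (perm_trans hpf); rewrite perm_sym; apply: (perm_trans hpg).
by rewrite eQ perm_cons perm_sym perm_map.
Qed.
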